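(* Let $Q\in\mathbb{R}^{n\times n}$ be symmetric and doubly stochastic with eigenvalues $1=\lambda_1>\lambda_2\ge\cdots\ge\lambda_n>-1$. Let $\delta\in(0,1)$ and $\gamma\in(0,1/4)$, and let $\tau\in\mathbb{N}$ satisfy $$\tau\ge\left\lceil\frac{2}{\gamma(1-\lambda_2)}\max\left\{4\ln\Big(\frac{2}{\gamma(1-\lambda_2)}\Big),\ \gamma(1-\lambda_2)-\ln\frac{\sqrt{\delta}}{4}\right\}\right\rceil.$$ Then $\|\mathbf{J}_\gamma^\tau\|^2\le\delta<1$, where $\mathbf{J}_\gamma^\tau$ is the $\tau$-fold product of $\mathbf{J}_\gamma$ with itself and $$\mathbf{J}_\gamma=\begin{bmatrix}\bar{\mathbf{I}}_n-\gamma\mathbf{Q}' & 0 & -(\bar{\mathbf{I}}_n-\gamma\mathbf{Q}')\\ 0 & \bar{\mathbf{I}}_n-\gamma\mathbf{Q}' & -\bar{\mathbf{I}}_n\\ 0&0&\bar{\mathbf{I}}_n-\gamma\mathbf{Q}'\end{bmatrix}\in\mathbb{R}^{3nd\times 3nd}.$$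
   Context: $d\in\mathbb{N}$; $\bar{\mathbf{I}}_n=(I_n-\frac1n1_n1_n^T)\otimes I_d$ and $\mathbf{Q}'=(I_n-Q)\otimes I_d$, where $1_n$ is the all-ones vector and $\otimes$ the Kronecker product. $\|\cdot\|$ is the spectral ($\ell_2$ operator) norm and $\lceil\cdot\rceil$ the ceiling function. *)

(* Defs.v *)
From HB Require Import structures.
From mathcomp Require Import all_boot all_order all_algebra.
From mathcomp Require Import mxtens.
From mathcomp Require Import classical_sets reals exp.
Set Implicit Arguments. Unset Strict Implicit. Unset Printing Implicit Defensive.
Import Order.TTheory GRing.Theory Num.Theory.
Local Open Scope ring_scope.
Local Open Scope classical_set_scope.

Definition vnorm (R : realType) (m : nat) (x : 'cV[R]_m) : R :=
  Num.sqrt (\sum_(i < m) x i 0 ^+ 2).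

Definition spec_norm (R : realType) (m p : nat) (A : 'M[R]_(m, p)) : R :=
  sup [set vnorm (A *m x) | x in [set x : 'cV[R]_p | vnorm x <= 1]].

Definition mxpow (R : realType) (m : nat) (A : 'M[R]_m) (k : nat) : 'M[R]_m :=
  iter k (mulmx A) 1%:M.

Definition doubly_stochastic (R : realType) (n : nat) (Q : 'M[R]_n) : Prop :=
  (forall i j, 0 <= Q i j) /\
  (forall i, \sum_(j < n) Q i j = 1) /\
  (forall j, \sum_(i < n) Q i j = 1).

Definition Ibar (R : realType) (n d : nat) : 'M[R]_(n * d) :=
  tensmx (1%:M - (n%:R)^-1 *: const_mx 1 : 'M[R]_n) (1%:M : 'M[R]_d).

Definition Qprime (R : realType) (n d : nat) (Q : 'M[R]_n) : 'M[R]_(n * d) :=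
  tensmx (1%:M - Q) (1%:M : 'M[R]_d).

(* The 3x3 block matrix J_gamma, of size 3nd = (nd + nd) + nd. *)
Definition Jgamma (R : realType) (n d : nat) (Q : 'M[R]_n) (gamma : R)
  : 'M[R]_(n * d + n * d + n * d) :=
  let A := Ibar R n d - gamma *: Qprime d Q in
  block_mx (block_mx A 0 0 A) (col_mx (- A) (- Ibar R n d))
           (row_mx 0 0) A.

(* Main.v *)
Require Import Defs.
From HB Require Import structures.
From mathcomp Require Import all_boot all_order all_algebra.
From mathcomp Require Import mxtens.
From mathcomp Require Import classical_sets reals exp.
From mathcomp Require Import sesquilinear spectral mxred.
From mathcomp Require Import complex.
From mathcomp Require Import ring lra.
From mathcomp Require Import sequences.
Set Implicit Arguments. Unset Strict Implicit. Unset Printing Implicit Defensive.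
Import Order.TTheory GRing.Theory Num.Theory.
Local Open Scope ring_scope.
Section Core.
Variable C : numClosedFieldType.
Local Open Scope sesquilinear_scope.

Definition csq n (v : 'cV[C]_n) : C := \sum_(i < n) `|v i 0| ^+ 2.

Lemma csq_mx n (v : 'cV[C]_n) : csq v = (v^t* *m v) 0 0.
Proof.
rewrite /csq !mxE; apply: eq_bigr => i _.
by rewrite !mxE normCK mulrC.
Qed.

Lemma csq_Ut n (U : 'M[C]_n) (w : 'cV_n) : U \is unitarymx ->
  csq (U^t* *m w) = csq w.
Proof.
move=> hU; rewrite !csq_mx trmx_mul map_mxM trmxCK.
by rewrite mulmxA -(mulmxA _ U) (unitarymxP hU) mulmx1.
Qed.

Lemma csq_U n (U : 'M[C]_n) (w : 'cV_n) : U \is unitarymx ->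
  csq (U *m w) = csq w.
Proof.
move=> hU; rewrite !csq_mx trmx_mul map_mxM.
by rewrite mulmxA -(mulmxA _ _ U) -invmx_unitary // mulVmx ?unitarymx_unit // mulmx1.
Qed.

Lemma csq_ge0 n (v : 'cV[C]_n) : 0 <= csq v.
Proof. by apply: sumr_ge0 => i _; rewrite exprn_ge0. Qed.

Lemma core_bound n (U : 'M[C]_n) (a : 'rV[C]_n) (r : C) (z : 'cV_n) :
  U \is unitarymx -> (forall j, `|a 0 j| <= r) ->
  csq ((U^t* *m diag_mx a *m U) *m z) <= r ^+ 2 * csq z.
Proof.
move=> hU ha; rewrite -!mulmxA csq_Ut // -(csq_U z hU).
rewrite /csq mulr_sumr; apply: ler_sum => i _.
rewrite mul_diag_mx mxE normrM exprMn ler_wpM2r ?exprn_ge0 //.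
rewrite expr2 expr2 ler_pM //; exact: ha.
Qed.
End Core.
Lemma char_poly_conj (F : fieldType) n (U D : 'M[F]_n) : U \in unitmx ->
  char_poly (invmx U *m D *m U) = char_poly D.
Proof.
move=> hU.
have E : char_poly_mx (invmx U *m D *m U) =
  map_mx polyC (invmx U) *m char_poly_mx D *m map_mx polyC U.
  rewrite /char_poly_mx mulmxBr mulmxBl -!map_mxM.
  by rewrite mul_mx_scalar -scalemxAl -map_mxM mulVmx // map_mx1 scalemx1.
rewrite /char_poly E !det_mulmx mulrC mulrA -!det_mulmx -map_mxM mulmxV //.
by rewrite map_mx1 mul1mx.
Qed.

Section Spec.
Variable R : realType.
Local Notation rc := (real_complex R).
Local Open Scope sesquilinear_scope.

Lemma rc_real (x : R) : (x%:C)%C \is Num.real.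
Proof. by rewrite complex_real. Qed.

Lemma rc_herm n (Q : 'M[R]_n) : Q^T = Q -> (Q ^ rc) \is hermsymmx.
Proof.
move=> sQ; apply/is_hermitianmxP; rewrite expr0 scale1r.
apply/matrixP => i j; rewrite !mxE conj_Creal ?rc_real //.
by rewrite -[in RHS]sQ mxE.
Qed.

End Spec.
Lemma count_index_enum n (f : 'I_n -> bool) : count f (index_enum 'I_n) = #|[pred i | f i]|.
Proof. rewrite -size_filter cardE /enum_mem. rewrite [index_enum _]unlock. by []. Qed.

Section Spec2.
Variable R : realType.
Local Notation rc := (real_complex R).
Local Open Scope sesquilinear_scope.

Lemma spec_decomp n (Q : 'M[R]_n) (lambda : nat -> R) :
  Q^T = Q ->
  (forall i, \sum_(j < n) Q i j = 1) ->
  char_poly Q = \prod_(1 <= i < n.+1) ('X - (lambda i)%:P) ->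
  lambda 1%N = 1 ->
  (forall i, (2 <= i <= n)%N -> lambda i < 1) ->
  (0 < n)%N ->
  exists U : 'M[R[i]]_n, exists dv : 'rV[R[i]]_n, exists j0 : 'I_n,
    [/\ U \is unitarymx, Q ^ rc = U^t* *m diag_mx dv *m U, dv 0 j0 = 1,
        (forall j, j != j0 -> exists2 i, (2 <= i <= n)%N & dv 0 j = (lambda i)%:C%C) &
        (const_mx 1 : 'M[R]_n) ^ rc = n%:R *: (U^t* *m delta_mx j0 j0 *m U)].
Proof.
move=> sQ rowQ hchar l1 llt n_gt0.
set Qc := Q ^ rc.
have hN : Qc \is normalmx := hermitian_normalmx (rc_herm sQ).
set U := spectralmx Qc; set dv := spectral_diag Qc.
have hU : U \is unitarymx := spectral_unitarymx Qc.
have Uu : U \in unitmx := unitarymx_unit hU.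
have EQ : Qc = U^t* *m diag_mx dv *m U.
  by rewrite -invmx_unitary //; move: hN => /orthomx_spectralP.
have UtU : U^t* *m U = 1%:M by rewrite -invmx_unitary // mulVmx.
have UUt : U *m U^t* = 1%:M by exact/unitarymxP.
have CP : \prod_(i < n) ('X - (dv 0 i)%:P) =
          \prod_(1 <= i < n.+1) ('X - ((lambda i)%:C%C)%:P).
  have -> : \prod_(i < n) ('X - (dv 0 i)%:P) = char_poly Qc.
    rewrite EQ -invmx_unitary // char_poly_conj // char_poly_trig ?diag_mx_is_trig //.
    by apply: eq_bigr => i _; rewrite mxE eqxx mulr1n.
  rewrite /Qc -map_char_poly hchar rmorph_prod.
  by apply: eq_bigr => i _; exact: (map_polyXsubC (real_complex R)).
set s1 := [seq dv 0 i | i <- index_enum 'I_n].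
set s2 := [seq (lambda i)%:C%C | i <- iota 1 n].
have PE : perm_eq s1 s2.
  apply: prod_XsubC_eq; rewrite !big_map.
  move: CP; rewrite /index_iota subn1 /=. by [].
have C2 : count_mem 1 s2 = 1%N.
  have [n' En] : exists n', n = n'.+1 by exists n.-1; rewrite prednK.
  rewrite /s2 En; rewrite En in llt.
  rewrite /= l1 rmorph1 eqxx /= count_map.
  rewrite (eq_in_count (a2 := pred0)) ?count_pred0 // => i.
  rewrite mem_iota => /andP[i2 i3] /=.
  rewrite -(rmorph1 (real_complex R)) (inj_eq (@complexI _)).
  by rewrite lt_eqF // llt // i2 -ltnS -add2n.
have C1 : #|[pred j | dv 0 j == 1]| = 1%N.
  by rewrite -count_index_enum -[in RHS]C2 -(permP PE) /s1 count_map.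
have [j0 Hj0] := mem_card1 C1.
have dvj0 : dv 0 j0 = 1 by apply/eqP; move: (Hj0 j0); rewrite !inE eqxx.
have dvj : forall j, j != j0 -> dv 0 j != 1.
  by move=> j; move: (Hj0 j); rewrite !inE => ->.
exists U, dv, j0; split => //.
  move=> j /dvj nj1.
  have : dv 0 j \in s2 by rewrite -(perm_mem PE) map_f // mem_index_enum.
  case/mapP => i; rewrite mem_iota => /andP[i1 i2] Ei.
  exists i => //; apply/andP; split; last by rewrite -ltnS -(add1n n).
  rewrite ltn_neqAle i1 andbT; apply/negP => /eqP i1E.
  by move: nj1; rewrite Ei -i1E l1 rmorph1 eqxx.
set one := const_mx 1 : 'cV[R[i]]_n.
have Q1 : Qc *m one = one.
  apply/matrixP => i k; rewrite !mxE.
  under eq_bigr do rewrite !mxE mulr1.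
  by rewrite -rmorph_sum rowQ rmorph1.
set v := U *m one.
have Dv : diag_mx dv *m v = v.
  have := congr1 (mulmx U) Q1; rewrite EQ !mulmxA UUt mul1mx.
  by rewrite /v; move=> h; exact: h.
have v0 : forall j, j != j0 -> v j 0 = 0.
  move=> j /dvj nj1; have /matrixP/(_ j 0) := Dv.
  rewrite mul_diag_mx mxE => /eqP; rewrite -subr_eq0 -{2}(mul1r (v j 0)) -mulrBl.
  by rewrite mulf_eq0 subr_eq0 (negbTE nj1) /= => /eqP.
have one_v : one = U^t* *m v by rewrite /v mulmxA UtU mul1mx.
have cmx : (const_mx 1 : 'M[R]_n) ^ rc = one *m one^t*.
  by apply/matrixP=> i k; rewrite !mxE big_ord1 !mxE rmorph1 conjC1 mulr1.
have csqv : csq v = n%:R.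
  rewrite /v csq_U // /csq.
  under eq_bigr do rewrite mxE normr1 expr1n.
  by rewrite sumr_const card_ord.
clearbody v.
have vv : v *m v^t* = n%:R *: delta_mx j0 j0.
  apply/matrixP => i k; rewrite !mxE big_ord1 !mxE.
  have [->|ij] := eqVneq i j0; last by rewrite v0 // mul0r mulr0.
  have [->|kj] := eqVneq k j0; last by rewrite (v0 k) // conjC0 mulr0 mulr0.
  rewrite -normCK -csqv /csq (bigD1 j0) //= big1 ?addr0 ?mulr1 //.
  by move=> j /v0 ->; rewrite normr0 expr0n.
rewrite cmx {2}one_v trmx_mul map_mxM trmxCK one_v.
rewrite !mulmxA -(mulmxA _ v) vv -scalemxAr -scalemxAl.
by [].
Qed.
End Spec2.
Section RealBound.
Variable R : realType.
Local Notation rc := (real_complex R).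
Local Open Scope sesquilinear_scope.

Definition rsq n (z : 'cV[R]_n) : R := \sum_(i < n) z i 0 ^+ 2.

Lemma rc_norm (x : R) : `|x%:C%C| = (`|x|)%:C%C.
Proof. by rewrite normc_def /= expr0n addr0 sqrtr_sqr. Qed.

Lemma rsq_csq n (z : 'cV[R]_n) : csq (map_mx rc z) = (rsq z)%:C%C.
Proof.
rewrite /csq /rsq rmorph_sum; apply: eq_bigr => i _.
by rewrite mxE rc_norm -rmorphXn -normrX ger0_norm ?sqr_ge0.
Qed.

Lemma rsq_ge0 n (z : 'cV[R]_n) : 0 <= rsq z.
Proof. by apply: sumr_ge0 => i _; rewrite sqr_ge0. Qed.

Lemma transfer_bound n (X : 'M[R]_n) (U : 'M[R[i]]_n) (a : 'rV[R[i]]_n) (r : R) :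
  U \is unitarymx -> X ^ rc = U^t* *m diag_mx a *m U ->
  (forall j, `|a 0 j| <= r%:C%C) ->
  forall z, rsq (X *m z) <= r ^+ 2 * rsq z.
Proof.
move=> hU EX ha z; have := core_bound (map_mx rc z) hU ha.
by rewrite -EX -map_mxM !rsq_csq -rmorphXn -rmorphM lecR.
Qed.
End RealBound.
Section A0Bound.
Variable R : realType.
Local Notation rc := (real_complex R).
Local Open Scope sesquilinear_scope.

Lemma conj_sandwich n (U : 'M[R[i]]_n) (M1 M2 : 'M[R[i]]_n) (c : R[i]) :
  U^t* *m (M1 - c *: M2) *m U = U^t* *m M1 *m U - c *: (U^t* *m M2 *m U).
Proof. by rewrite mulmxBr mulmxBl -scalemxAr -scalemxAl. Qed.

Lemma A0P0_bounds n (Q : 'M[R]_n) (lambda : nat -> R) (gamma : R) :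
  (2 <= n)%N -> Q^T = Q -> (forall i, \sum_(j < n) Q i j = 1) ->
  char_poly Q = \prod_(1 <= i < n.+1) ('X - (lambda i)%:P) ->
  lambda 1%N = 1 -> lambda 2%N < 1 ->
  (forall i j, (2 <= i)%N -> (i <= j)%N -> (j <= n)%N -> lambda j <= lambda i) ->
  -1 < lambda n -> 0 < gamma < 4^-1 ->
  (forall z, rsq ((1%:M - n%:R^-1 *: const_mx 1 - gamma *: (1%:M - Q)) *m z)
              <= (1 - gamma * (1 - lambda 2%N)) ^+ 2 * rsq z) /\
  (forall z, rsq ((1%:M - n%:R^-1 *: const_mx 1 : 'M[R]_n) *m z) <= 1 ^+ 2 * rsq z).
Proof.
move=> n2 sQ rowQ hchar l1 l2 lmono ln /andP[g0 g4].
have n0 : (0 < n)%N by apply: leq_trans n2.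
have llt : forall i, (2 <= i <= n)%N -> lambda i < 1.
  by move=> i /andP[i2 iN]; apply: le_lt_trans l2; apply: lmono.
have lge : forall i, (2 <= i <= n)%N -> -1 < lambda i.
  by move=> i /andP[i2 iN]; exact: (lt_le_trans ln (lmono _ _ i2 iN (leqnn n))).
have [U [dv [j0 [hU EQ dj0 dj cst]]]] := spec_decomp sQ rowQ hchar l1 llt n0.
have UtU : U^t* *m U = 1%:M by rewrite -invmx_unitary // mulVmx // unitarymx_unit.
have nC : (n%:R : R[i]) != 0 by rewrite pnatr_eq0 -lt0n.
have P0c : (1%:M - n%:R^-1 *: const_mx 1 : 'M[R]_n) ^ rc =
    U^t* *m (1%:M - delta_mx j0 j0) *m U.
  rewrite map_mxB map_mxZ map_mx1 cst scalerA rmorphV ?unitfE ?pnatr_eq0 -?lt0n //.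
  rewrite rmorph_nat mulVf // scale1r.
  by rewrite mulmxBr mulmxBl mulmx1 UtU.
have Pd : (1%:M - delta_mx j0 j0 : 'M[R[i]]_n) = diag_mx (\row_j (1 - (j == j0)%:R)).
  apply/matrixP => i k; rewrite !mxE.
  have [->|ik] := eqVneq i k; first by rewrite andbb mulr1n.
  rewrite mulr0n sub0r; have [ij|_] := eqVneq i j0 => /=; last by rewrite oppr0.
  by rewrite -ij eq_sym (negbTE ik) oppr0.
split; last first.
  apply: (transfer_bound hU); first by rewrite P0c Pd.
  move=> j; rewrite mxE rmorph1.
  by have [_|_] := eqVneq j j0; rewrite ?subrr ?normr0 ?subr0 ?normr1.
have Ad : (1%:M - delta_mx j0 j0) - (gamma%:C%C) *: (1%:M - diag_mx dv) =
   diag_mx (\row_j (1 - (j == j0)%:R - gamma%:C%C * (1 - dv 0 j)) : 'rV[R[i]]_n).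
  rewrite Pd; apply/matrixP => i k; rewrite !mxE.
  have [->|ik] := eqVneq i k; first by rewrite !mulr1n.
  by rewrite !mulr0n subr0 mulr0 subr0.
have A0c : (1%:M - n%:R^-1 *: const_mx 1 - gamma *: (1%:M - Q)) ^ rc =
    U^t* *m diag_mx (\row_j (1 - (j == j0)%:R - gamma%:C%C * (1 - dv 0 j))) *m U.
  rewrite map_mxB map_mxZ P0c [X in _ - _ *: X]map_mxB map_mx1 EQ -Ad conj_sandwich.
  by congr (_ - _ *: _); rewrite mulmxBr mulmxBl mulmx1 UtU.
apply: (transfer_bound hU A0c) => j; rewrite mxE.
have rho0 : 0 <= 1 - gamma * (1 - lambda 2%N).
  have := lge 2%N; rewrite leqnn n2 => /(_ isT) => l2g. nra.
have [->|jj0] := eqVneq j j0.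
  by rewrite dj0 (_ : true%:R = 1 :> R[i]) // !subrr mulr0 subrr normr0 ler0c.
have [i /andP[i2 iN] ->] := dj j jj0.
rewrite subr0 -(rmorph1 rc) -rmorphB -rmorphM -rmorphB rc_norm lecR.
have := lge i; rewrite i2 iN => /(_ isT) => lig.
have := lmono 2%N i (leqnn 2) i2 iN => li2.
rewrite ger0_norm; first by nra.
nra.
Qed.
End A0Bound.
Section Tens.
Variable R : realType.

Lemma sum_tens n d (F : 'I_(n * d) -> R) :
  \sum_(k < n * d) F k = \sum_(l < d) \sum_(i < n) F (mxtens_index (i, l)).
Proof.
rewrite (reindex (@mxtens_index n d)) /=; last first.
  by apply: onW_bij; exists (@mxtens_unindex n d);
    [exact: mxtens_indexK | exact: mxtens_unindexK].
rewrite exchange_big pair_big /=.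
by apply: eq_big => // -[i l] _ /=.
Qed.

Definition colt n d (x : 'cV[R]_(n * d)) (l : 'I_d) : 'cV[R]_n :=
  \col_i x (mxtens_index (i, l)) 0.

Lemma rsq_colt n d (x : 'cV[R]_(n * d)) : rsq x = \sum_(l < d) rsq (colt x l).
Proof.
rewrite /rsq sum_tens; apply: eq_bigr => l _; apply: eq_bigr => i _.
by rewrite mxE.
Qed.

Lemma colt_mul n d (B : 'M[R]_n) (x : 'cV[R]_(n * d)) l :
  colt ((B *t (1%:M : 'M_d)) *m x) l = B *m colt x l.
Proof.
apply/matrixP => i k; rewrite !mxE sum_tens.
rewrite (bigD1 l) //= [X in _ + X]big1 ?addr0.
  by apply: eq_bigr => j _; rewrite tensmxE !mxE eqxx mulr1.
move=> m ml; apply: big1 => j _.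
by rewrite tensmxE mxE eq_sym (negbTE ml) mulr0 mul0r.
Qed.

Lemma tens_bound n d (B : 'M[R]_n) (c : R) :
  (forall z : 'cV_n, rsq (B *m z) <= c * rsq z) ->
  forall x : 'cV_(n * d), rsq ((B *t (1%:M : 'M_d)) *m x) <= c * rsq x.
Proof.
move=> hB x; rewrite !rsq_colt mulr_sumr; apply: ler_sum => l _.
by rewrite colt_mul.
Qed.
End Tens.
Section Numeric.
Variable R : realType.

Lemma numeric (a delta : R) (tau : nat) :
  0 < a -> a < 2^-1 -> 0 < delta ->
  (Num.ceil (2 / a * Num.max (4 * ln (2 / a)) (a - ln (Num.sqrt delta / 4))) <= tau%:Z)%R ->
  (0 < tau)%N /\ tau%:R * (1 - a) ^+ tau.-1 <= Num.sqrt delta / 8.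
Proof.
move=> a0 a2 d0 hc.
set L := ln (2 / a).
set sd := Num.sqrt delta.
have sd0 : 0 < sd by rewrite sqrtr_gt0.
set t : R := tau%:R.
have hX : 2 / a * Num.max (4 * L) (a - ln (sd / 4)) <= t.
  apply: le_trans (ceil_ge _) _.
  by rewrite /t -(ler_int R) in hc; rewrite -[t]/(tau%:R) pmulrn.
have L0 : 0 < L.
  apply: ln_gt0; rewrite ltr_pdivlMr //; lra.
set y := a * t / 2.
have hM : Num.max (4 * L) (a - ln (sd / 4)) <= y.
  set M := Num.max _ _ in hX *.
  have -> : M = a / 2 * (2 / a * M) by field; rewrite gt_eqF.
  have -> : y = a / 2 * t by rewrite /y mulrAC.
  by rewrite ler_pM2l ?divr_gt0.
have hyL : 4 * L <= y by apply: le_trans hM; rewrite le_max lexx.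
have hyd : a - ln (sd / 4) <= y by apply: le_trans hM; rewrite le_max lexx orbT.
have t0 : 0 < t.
  have : 0 < y by apply: lt_le_trans hyL; rewrite mulr_gt0.
  rewrite /y => hy; nra.
have tau0 : (0 < tau)%N by move: t0; rewrite /t ltr0n.
split => //.
have ht : t = tau.-1%:R + 1 by rewrite /t -{1}(prednK tau0) -addn1 natrD.
have Ena : 1 - a <= expR (- a) by have := expR_ge1Dx (- a); lra.
have pw : (1 - a) ^+ tau.-1 <= expR (- a * (t - 1)).
  apply: le_trans (lerXn2r _ _ _ Ena) _; rewrite ?nnegrE ?expR_ge0 //; first lra.
  by rewrite -expRM_natr ht addrK.
set E := expR (- y).
have E0 : 0 <= E by exact: expR_ge0.
have E3 : expR (- a * (t - 1)) = expR a * (E * E).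
  by rewrite /E -!expRD; congr expR; rewrite /y; field.
have B1 : E <= expR (- a) * (sd / 4).
  have -> : sd / 4 = expR (ln (sd / 4)) by rewrite lnK // posrE divr_gt0.
  by rewrite -expRD ler_expR; lra.
have B2 : t * E <= a.
  have h1 : y <= 2 * expR (y / 2) by have := expR_ge1Dx (y / 2); have := expR_ge0 (y / 2); lra.
  have h2 : expR (- (y / 2)) <= (a / 2) ^+ 2.
    have -> : (a / 2) ^+ 2 = expR (- (2 * L)).
      rewrite expRN expRM_natl /L lnK ?posrE ?divr_gt0 //.
      by rewrite -exprVn invf_div.
    by rewrite ler_expR; lra.
  have e2 : expR (y / 2) * E = expR (- (y / 2)) by rewrite /E -expRD; congr expR; field.
  have yE : y * E <= a ^+ 2 / 2.
    nra.
  have -> : t = 2 / a * y by rewrite /y; field; rewrite gt_eqF.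
  have -> : 2 / a * y * E = (2 * (y * E)) / a by field; rewrite gt_eqF.
  rewrite ler_pdivrMr //; lra.
apply: le_trans (ler_wpM2l _ pw) _; first lra.
rewrite E3 mulrA mulrCA mulrA.
have h4 := ler_pM (mulr_ge0 (ltW t0) E0) E0 B2 B1.
have ea := expRxMexpNx_1 a.
have ea0 := expR_ge0 a.
have h5 := ler_wpM2l ea0 h4.
apply: (le_trans (y := expR a * (t * E * E))).
  by rewrite (mulrC t) -!mulrA.
apply: le_trans h5 _.
have -> : expR a * (a * (expR (- a) * (sd / 4))) = (expR a * expR (- a)) * (a * sd / 4) by field.
rewrite ea mul1r; nra.
Qed.
End Numeric.
Section Block.
Variable R : realType.

Lemma mxpowSr N (A : 'M[R]_N) k : mxpow A k.+1 = mxpow A k *m A.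
Proof.
elim: k => [|k IH]; first by rewrite /mxpow /= mulmx1 mul1mx.
rewrite [mxpow A k.+2]/mxpow iterS -/(mxpow A k.+1) {1}IH mulmxA; reflexivity.
Qed.

Lemma rsq_col m1 m2 (u : 'cV[R]_m1) (v : 'cV[R]_m2) :
  rsq (col_mx u v) = rsq u + rsq v.
Proof.
rewrite /rsq big_split_ord /=; congr (_ + _); apply: eq_bigr => i _.
  by rewrite col_mxEu.
by rewrite col_mxEd.
Qed.

Lemma rsqN m (u : 'cV[R]_m) : rsq (- u) = rsq u.
Proof. by apply: eq_bigr => i _; rewrite mxE sqrrN. Qed.

Lemma rsqZ m c (u : 'cV[R]_m) : rsq (c *: u) = c ^+ 2 * rsq u.
Proof. by rewrite /rsq mulr_sumr; apply: eq_bigr => i _; rewrite mxE exprMn. Qed.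

Lemma rsqD m (u v : 'cV[R]_m) : rsq (u + v) <= 2 * rsq u + 2 * rsq v.
Proof.
rewrite /rsq !mulr_sumr -big_split /=; apply: ler_sum => i _.
rewrite mxE; have := sqr_ge0 (u i 0 - v i 0); nra.
Qed.

Lemma pow_bound N (A : 'M[R]_N) (c : R) :
  (forall x, rsq (A *m x) <= c * rsq x) -> 0 <= c ->
  forall k x, rsq (mxpow A k *m x) <= c ^+ k * rsq x.
Proof.
move=> hA c0; elim=> [|k IH] x; first by rewrite /mxpow /= mul1mx expr0 mul1r.
rewrite [mxpow A k.+1]/mxpow iterS -/(mxpow A k) -mulmxA.
apply: le_trans (hA _) _; rewrite exprS -mulrA ler_wpM2l //.
Qed.
End Block.
Section BlockPow.
Variable R : realType.
Variables (N : nat) (A Pb : 'M[R]_N).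
Hypotheses (hPA : Pb *m A = A) (hAP : A *m Pb = A).

Definition Jm : 'M[R]_(N + N + N) :=
  block_mx (block_mx A 0 0 A) (col_mx (- A) (- Pb)) (row_mx 0 0) A.

Lemma PbAk k : Pb *m mxpow A k.+1 = mxpow A k.+1.
Proof. by rewrite [mxpow A k.+1]/mxpow iterS -/(mxpow A k) mulmxA hPA. Qed.

Lemma AkPb k : mxpow A k.+1 *m Pb = mxpow A k.+1.
Proof. by rewrite mxpowSr -mulmxA hAP. Qed.

Lemma mxpow_J k : mxpow Jm k =
  block_mx (block_mx (mxpow A k) 0 0 (mxpow A k))
    (col_mx (- (k%:R *: mxpow A k)) (- (k%:R *: (mxpow A k.-1 *m Pb))))
    0 (mxpow A k).
Proof.
elim: k => [|k IH].
  rewrite /mxpow /= !scale0r oppr0 col_mx0. rewrite -[in X in block_mx X _ _ _]scalar_mx_block. exact: scalar_mx_block.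
rewrite [mxpow Jm k.+1]/mxpow iterS -/(mxpow Jm k) IH /Jm row_mx0 mulmx_block.
rewrite !mul0mx !mulmx0 !addr0 !add0r mulmx_block !mul0mx !mulmx0 !addr0 !add0r.
rewrite mul_block_col mul_col_mx add_col_mx !mul0mx !add0r !addr0.
congr block_mx; congr col_mx.
  rewrite mulmxN -scalemxAr mulNmx -opprD mulrSr scalerDl scale1r.
  by [].
rewrite mulmxN -scalemxAr mulNmx -opprD mulrSr scalerDl scale1r /=.
case: k {IH} => [|k].
  by rewrite /mxpow /= !mulr0n !scale0r !add0r mulmx1 mul1mx.
rewrite mulmxA -/(mxpow A k.+1) PbAk AkPb.
by [].
Qed.
End BlockPow.
Section JBound.
Variable R : realType.
Variables (N : nat) (A Pb : 'M[R]_N).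
Hypotheses (hPA : Pb *m A = A) (hAP : A *m Pb = A).

Lemma J_bound (rho : R) (k : nat) : 0 <= rho <= 1 -> (0 < k)%N ->
  (forall x, rsq (A *m x) <= rho ^+ 2 * rsq x) ->
  (forall x, rsq (Pb *m x) <= 1 ^+ 2 * rsq x) ->
  forall x, rsq (mxpow (Jm A Pb) k *m x) <= 5 * k%:R ^+ 2 * (rho ^+ 2) ^+ k.-1 * rsq x.
Proof.
move=> /andP[r0 r1] k0 hA hP x.
set c := rho ^+ 2.
have c0 : 0 <= c by rewrite sqr_ge0.
have c1 : c <= 1 by rewrite /c expr_le1.
set s := c ^+ k.-1.
have s0 : 0 <= s by rewrite exprn_ge0.
have hAk : forall z, rsq (mxpow A k *m z) <= s * rsq z.
  move=> z; apply: le_trans (pow_bound hA c0 k z) _.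
  rewrite -(prednK k0) exprS /s ler_wpM2r ?rsq_ge0 //.
  by rewrite ler_piMl ?exprn_ge0.
have hAk1 : forall z, rsq (mxpow A k.-1 *m z) <= s * rsq z by move=> z; exact: pow_bound.
rewrite -[x]vsubmxK -[usubmx x]vsubmxK.
set x1 := usubmx (usubmx x); set x2 := dsubmx (usubmx x); set x3 := dsubmx x.
rewrite (mxpow_J hPA hAP) !mul_block_col !mul0mx !addr0 !add0r mul_col_mx add_col_mx.
rewrite !rsq_col.
have r10 := rsq_ge0 x1; have r20 := rsq_ge0 x2; have r30 := rsq_ge0 x3.
have K1 : rsq ((- (k%:R *: mxpow A k)) *m x3) <= k%:R ^+ 2 * (s * rsq x3).
  by rewrite mulNmx rsqN -scalemxAl rsqZ ler_wpM2l ?sqr_ge0.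
have K2 : rsq ((- (k%:R *: (mxpow A k.-1 *m Pb))) *m x3) <= k%:R ^+ 2 * (s * rsq x3).
  rewrite mulNmx rsqN -scalemxAl rsqZ ler_wpM2l ?sqr_ge0 // -mulmxA.
  apply: le_trans (hAk1 _) _; rewrite ler_wpM2l //.
  by have := hP x3; rewrite expr1n mul1r.
have Y1 := le_trans (rsqD _ _) (lerD (ler_wpM2l (ler0n _ 2) (hAk x1)) (ler_wpM2l (ler0n _ 2) K1)).
have Y2 := le_trans (rsqD _ _) (lerD (ler_wpM2l (ler0n _ 2) (hAk x2)) (ler_wpM2l (ler0n _ 2) K2)).
have Y3 := hAk x3.
have kk : 1 <= k%:R ^+ 2 :> R by rewrite expr_ge1 // ler1n.
have sr1 : 0 <= s * rsq x1 by rewrite mulr_ge0.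
have sr2 : 0 <= s * rsq x2 by rewrite mulr_ge0.
have sr3 : 0 <= s * rsq x3 by rewrite mulr_ge0.
set K := k%:R ^+ 2 in kk K1 K2 Y1 Y2 *.
set S1 := s * rsq x1 in sr1 Y1 *.
set S2 := s * rsq x2 in sr2 Y2 *.
set S3 := s * rsq x3 in sr3 K1 K2 Y1 Y2 Y3 *.
have -> : 5 * K * s * (rsq x1 + rsq x2 + rsq x3) = 5 * K * (S1 + S2 + S3) by rewrite /S1 /S2 /S3; ring.
nra.
Qed.
End JBound.
Section Alg.
Variable R : realType.

Lemma tensmx_linl n d (X Y : 'M[R]_n) (c : R) :
  (X - c *: Y) *t (1%:M : 'M_d) = X *t 1%:M - c *: (Y *t 1%:M).
Proof.
apply/matrixP => k k'.
case: (mxtens_indexP k) => i j; case: (mxtens_indexP k') => i' j'.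
rewrite tensmxE.
have E1 := tensmxE X (1%:M : 'M_d) i j i' j'.
have E2 := tensmxE Y (1%:M : 'M_d) i j i' j'.
move: E1 E2; move: (X *t 1%:M) (Y *t 1%:M) => T1 T2 E1 E2.
rewrite !mxE E1 E2 !mxE.
by rewrite mulrBl mulrA.
Qed.

Lemma P0A0 n (Q : 'M[R]_n) (gamma : R) : (0 < n)%N ->
  (forall i, \sum_(j < n) Q i j = 1) -> (forall j, \sum_(i < n) Q i j = 1) ->
  let P0 := 1%:M - n%:R^-1 *: const_mx 1 : 'M[R]_n in
  let A0 := P0 - gamma *: (1%:M - Q) in
  P0 *m A0 = A0 /\ A0 *m P0 = A0.
Proof.
move=> n0 rowQ colQ P0 A0.
set J := const_mx 1 : 'M[R]_n.
have QJ : Q *m J = J.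
  by apply/matrixP => i j; rewrite !mxE -[RHS](rowQ i); apply: eq_bigr => k _; rewrite mxE mulr1.
have JQ : J *m Q = J.
  by apply/matrixP => i j; rewrite !mxE -[RHS](colQ j); apply: eq_bigr => k _; rewrite mxE mul1r.
have JJ : J *m J = n%:R *: J.
  apply/matrixP => i j; rewrite !mxE.
  under eq_bigr do rewrite !mxE mulr1.
  by rewrite sumr_const card_ord mulr1.
have nR : (n%:R : R) != 0 by rewrite pnatr_eq0 -lt0n.
have JP0 : J *m P0 = 0.
  by rewrite /P0 mulmxBr mulmx1 -scalemxAr JJ scalerA mulVf // scale1r subrr.
have P0J : P0 *m J = 0.
  by rewrite /P0 mulmxBl mul1mx -scalemxAl JJ scalerA mulVf // scale1r subrr.
have P0P0 : P0 *m P0 = P0.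
  by rewrite {1}/P0 mulmxBl mul1mx -scalemxAl JP0 scaler0 subr0.
have P0M : P0 *m (1%:M - Q) = 1%:M - Q.
  by rewrite /P0 mulmxBl mul1mx -scalemxAl mulmxBr mulmx1 JQ subrr scaler0 subr0.
have MP0 : (1%:M - Q) *m P0 = 1%:M - Q.
  by rewrite /P0 mulmxBr mulmx1 -scalemxAr mulmxBl mul1mx QJ subrr scaler0 subr0.
split.
  by rewrite /A0 mulmxBr -scalemxAr P0P0 P0M.
by rewrite /A0 mulmxBl -scalemxAl P0P0 MP0.
Qed.
End Alg.
Unset Implicit Arguments.

Theorem lemma2 (R : realType) (n d : nat) (Q : 'M[R]_n) (lambda : nat -> R)
  (delta gamma : R) (tau : nat) :
  (2 <= n)%N ->
  Q^T = Q ->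
  doubly_stochastic Q ->
  char_poly Q = \prod_(1 <= i < n.+1) ('X - (lambda i)%:P) ->
  lambda 1%N = 1 ->
  lambda 2%N < 1 ->
  (forall i j, (2 <= i)%N -> (i <= j)%N -> (j <= n)%N -> lambda j <= lambda i) ->
  -1 < lambda n ->
  0 < delta < 1 ->
  0 < gamma < 4^-1 ->
  (Num.ceil (2 / (gamma * (1 - lambda 2%N)) *
     Num.max (4 * ln (2 / (gamma * (1 - lambda 2%N))))
             (gamma * (1 - lambda 2%N) - ln (Num.sqrt delta / 4)))
    <= tau%:Z)%R ->
  spec_norm (mxpow (Jgamma d Q gamma) tau) ^+ 2 <= delta /\ delta < 1.
Proof.
move=> n2 sQ [Qge0 [rowQ colQ]] hchar l1 l2 lmono ln /andP[d0 d1] hg hc.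
split => //.
have n0 : (0 < n)%N by apply: leq_trans n2.
have [bA0 bP0] := A0P0_bounds n2 sQ rowQ hchar l1 l2 lmono ln hg.
have [PA AP] := P0A0 gamma n0 rowQ colQ.
move: hg => /andP[g0 g4].
have l2g : -1 < lambda 2%N := lt_le_trans ln (lmono 2%N n (leqnn 2) n2 (leqnn n)).
set a := gamma * (1 - lambda 2%N) in hc bA0.
have a0 : 0 < a by rewrite /a mulr_gt0 // subr_gt0.
have a2 : a < 2^-1 by rewrite /a; nra.
have [tau0 hnum] := numeric a0 a2 d0 hc.
set P0 := 1%:M - n%:R^-1 *: const_mx 1 : 'M[R]_n in bA0 bP0 PA AP.
set A0 := P0 - gamma *: (1%:M - Q) in bA0 PA AP.
set Ab := Ibar R n d - gamma *: Qprime d Q.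
set Pb := Ibar R n d.
have EAb : Ab = A0 *t (1%:M : 'M_d) by rewrite /Ab /Ibar /Qprime -tensmx_linl.
have EPb : Pb = P0 *t (1%:M : 'M_d) by [].
have hPA : Pb *m Ab = Ab by rewrite EAb EPb tensmx_mul PA mulmx1.
have hAP : Ab *m Pb = Ab by rewrite EAb EPb tensmx_mul AP mulmx1.
have bA : forall x, rsq (Ab *m x) <= (1 - a) ^+ 2 * rsq x by rewrite EAb; exact: tens_bound.
have bP : forall x, rsq (Pb *m x) <= 1 ^+ 2 * rsq x by rewrite EPb; exact: tens_bound.
have rho01 : 0 <= 1 - a <= 1 by apply/andP; split; lra.
have JB := J_bound hPA hAP rho01 tau0 bA bP.
have EJ : Jgamma d Q gamma = Jm Ab Pb by [].
rewrite EJ.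
set T := mxpow (Jm Ab Pb) tau in JB *.
set K := 5 * tau%:R ^+ 2 * ((1 - a) ^+ 2) ^+ tau.-1 in JB.
have K0 : 0 <= K by rewrite /K !mulr_ge0 ?exprn_ge0 ?sqr_ge0 //; lra.
have Kd : K <= delta.
  have e : K = 5 * (tau%:R * (1 - a) ^+ tau.-1) ^+ 2.
    have e2 : ((1 - a) ^+ 2) ^+ tau.-1 = ((1 - a) ^+ tau.-1) ^+ 2 by rewrite -!exprM mulnC.
    rewrite /K e2; ring.
  have hn0 : 0 <= tau%:R * (1 - a) ^+ tau.-1 by rewrite mulr_ge0 ?exprn_ge0 //; lra.
  have sq : (tau%:R * (1 - a) ^+ tau.-1) ^+ 2 <= (Num.sqrt delta / 8) ^+ 2.
    by apply: lerXn2r => //; rewrite ?nnegrE ?divr_ge0 ?sqrtr_ge0.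
  rewrite expr_div_n sqr_sqrtr ?(ltW d0) // in sq.
  rewrite e; lra.
have hb : forall x, vnorm x <= 1 -> vnorm (T *m x) <= Num.sqrt delta.
  move=> x hx; rewrite /vnorm ler_wsqrtr //.
  have rx : rsq x <= 1.
    have := rsq_ge0 x => r0.
    rewrite -(sqr_sqrtr r0) expr_le1 ?sqrtr_ge0 //.
  apply: le_trans (JB x) _.
  apply: le_trans (ler_wpM2l K0 rx) _; rewrite mulr1 //.
have v0 : vnorm (T *m 0) = 0.
  by rewrite mulmx0 /vnorm big1 ?sqrtr0 // => i _; rewrite mxE expr0n.
rewrite /spec_norm; set S := (X in sup X).
have S0 : S 0.
  exists 0; last exact: v0.
  by rewrite /= /vnorm big1 ?sqrtr0 ?ler01 // => i _; rewrite mxE expr0n.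
have ubS : ubound S (Num.sqrt delta) by move=> y [x hx <-]; exact: hb.
have sup_le : sup S <= Num.sqrt delta by apply: ge_sup => //; exists 0.
have sup_ge : 0 <= sup S by apply: (ub_le_sup _ S0); exists (Num.sqrt delta).
apply: le_trans (lerXn2r 2 _ _ sup_le) _; rewrite ?nnegrE ?sqrtr_ge0 //.
by rewrite sqr_sqrtr ?(ltW d0).
Qed.
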